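(* Let $\mathcal C,\mathcal D$ be connected $\Delta$-complexes labeled over a common $B(X,P)$, let $f\colon\mathcal C\to\mathcal D$ be an immersion commuting with the labelings, and let $v$ be any $0$-cell of $\mathcal C$. Then $f$ is a covering map if and only if $L(\mathcal C,v)$ is a full closed inverse submonoid of $L(\mathcal D,f(v))$, that is, $L(\mathcal C,v)$ contains every idempotent of $L(\mathcal D,f(v))$.
   Context: A $\Delta$-complex is a CW-complex in which each $k$-cell $c$ has a distinguished characteristic map $\sigma_c\colon\Delta^k=[v_0,\dots,v_k]\to\mathcal C$ whose restriction to each $(k-1)$-face (identified order-preservingly with $\Delta^{k-1}$) is the distinguished characteristic map of a $(k-1)$-cell; root of $c$ is $\sigma_c(v_0)$; a $1$-cell $e$ is directed from $\sigma_e(v_0)$ to $\sigma_e(v_1)$. Complexes are finite-dimensional. An immersion is a continuous map that is a local homeomorphism onto its image and commutes with characteristic maps (each $k$-cell $d$ maps onto a $k$-cell with $f\circ\sigma_d=\sigma_{f(d)}$). $B(X,P)$ is a $\Delta$-complex with one $0$-cell, $1$-cells indexed by $X$, $k$-cells ($2\le k\le n$) indexed by $P_k$, index sets pairwise disjoint, $P=\bigcup P_k$. A complex $\mathcal C$ is labeled over $B(X,P)$ via an immersion $f_{\mathcal C}\colon\mathcal C\to B(X,P)$; $\ell(c)$ is the index of $f_{\mathcal C}(c)$; $f\colon\mathcal C\to\mathcal D$ commutes with labelings if $f_{\mathcal D}\circ f=f_{\mathcal C}$. Boundary labels: for a $k$-cell $c$ ($k\ge2$) with characteristic map $\sigma$,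 $c_i$ is the $(k-1)$-cell with characteristic map $\sigma$ restricted to the face omitting $v_i$, $e(c)=\sigma([v_0,v_1])$; $bl(c)=\ell(\sigma[v_0,v_1])\ell(\sigma[v_1,v_2])\ell(\sigma[v_0,v_2])^{-1}$ if $k=2$, $bl(c)=\ell(c_k)\cdots\ell(c_1)\ell(e(c))\ell(c_0)\ell(e(c))^{-1}$ if $k\ge3$; $bl(\rho)$ is that of the cell of $B(X,P)$ labeled $\rho$. $M(X,P)$ is the inverse monoid presented by generators $X\cup P$ and relations $\rho^2=\rho$, $\rho=\rho\,bl(\rho)$ for $\rho\in P$. $M(X,P)$ acts on the right by partial injections on the $0$-cells of a labeled complex: $v\cdot x=w$ iff there is a $1$-cell labeled $x\in X$ from $v$ to $w$, $v\cdot x^{-1}=w$ iff there is one from $w$ to $v$, $v\cdot\rho=v$ iff $v$ is the root of a cell labeled $\rho\in P$ (undefined otherwise); this extends to a well-defined action of $M(X,P)$. The loop monoid is $L(\mathcal C,v)=\{m\in M(X,P): v\cdot m=v\}$. Closed: $N=N^\omega$ where $N^\omega=\{m: m\ge n\text{ for some } n\in N\}$ in the natural partial order ($a\le b$ iff $a=eb$, $e$ idempotent). *)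

(* Defs.v *)
From Stdlib Require Import List Arith Relations.
Import ListNotations.

(** A Delta-complex, given combinatorially: [cell k] is the type of k-cells,
    [face k i c] (for a (k+1)-cell c, 0 <= i <= k+1) is the k-cell whose
    characteristic map is that of c restricted to the face omitting v_i.
    Compatibility of restrictions = the simplicial identities. *)
Record DeltaComplex := {
  cell : nat -> Type;
  face : forall k, nat -> cell (S k) -> cell k;
  face_face : forall k (c : cell (S (S k))) i j, i < j -> j <= S (S k) ->
     face k i (face (S k) j c) = face k (pred j) (face (S k) i c)
}.

Definition finite_dim (C : DeltaComplex) : Prop :=
  exists n, forall k, n < k -> cell C k -> False.

(** [vertex i c] = sigma_c(v_i), the i-th vertex (0-cell) of the k-cell c. *)
Fixpoint vertex (C : DeltaComplex) (k : nat) {struct k} : nat -> cell C k -> cell C 0 :=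
  match k return nat -> cell C k -> cell C 0 with
  | 0 => fun _ c => c
  | S k' => fun i c =>
      if i <=? k' then vertex C k' i (face C k' (S k') c)
      else vertex C k' k' (face C k' 0 c)
  end.

Definition root (C : DeltaComplex) (k : nat) (c : cell C k) : cell C 0 := vertex C k 0 c.

(** e(c) = sigma_c([v_0,v_1]) for a (k+1)-cell c *)
Fixpoint edge01 (C : DeltaComplex) (k : nat) {struct k} : cell C (S k) -> cell C 1 :=
  match k return cell C (S k) -> cell C 1 with
  | 0 => fun c => c
  | S k' => fun c => edge01 C k' (face C (S k') (S (S k')) c)
  end.

Definition adj (C : DeltaComplex) (u w : cell C 0) : Prop :=
  exists e : cell C 1, vertex C 1 0 e = u /\ vertex C 1 1 e = w.

Definition connected (C : DeltaComplex) : Prop :=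
  forall u w : cell C 0, clos_refl_sym_trans (cell C 0) (adj C) u w.

Definition cmap (C D : DeltaComplex) := forall k, cell C k -> cell D k.

Definition commutes_faces (C D : DeltaComplex) (f : cmap C D) : Prop :=
  forall k i (c : cell C (S k)), i <= S k ->
    f k (face C k i c) = face D k i (f (S k) c).

(** local injectivity: distinct corners (c,i) at a common 0-cell have distinct images *)
Definition locally_injective (C D : DeltaComplex) (f : cmap C D) : Prop :=
  forall k i (c c' : cell C k), i <= k ->
    vertex C k i c = vertex C k i c' -> f k c = f k c' -> c = c'.

Definition immersion (C D : DeltaComplex) (f : cmap C D) : Prop :=
  commutes_faces C D f /\ locally_injective C D f.

Definition star_surjective (C D : DeltaComplex) (f : cmap C D) : Prop :=
  forall k i (v : cell C 0) (d : cell D k), i <= k ->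
    vertex D k i d = f 0 v -> exists c : cell C k, vertex C k i c = v /\ f k c = d.

(** covering map: surjective, and bijective on the star of every 0-cell *)
Definition covering (C D : DeltaComplex) (f : cmap C D) : Prop :=
  immersion C D f /\ star_surjective C D f /\ (forall w : cell D 0, exists v, f 0 v = w).

(** B(X,P): a Delta-complex with exactly one 0-cell (X = 1-cells, P_k = k-cells) *)
Definition single_vertex (B : DeltaComplex) : Prop :=
  exists b : cell B 0, forall b' : cell B 0, b' = b.

(** generators X u P of M(X,P): cells of B of positive dimension (k+1) *)
Definition Gen (B : DeltaComplex) := {k : nat & cell B (S k)}.
Definition gen (B : DeltaComplex) (k : nat) (c : cell B (S k)) : Gen B :=
  existT (fun k => cell B (S k)) k c.
(** letters: (generator, is_inverse) *)
Definition Letter (B : DeltaComplex) := (Gen B * bool)%type.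

Definition linv (B : DeltaComplex) (w : list (Letter B)) : list (Letter B) :=
  rev (map (fun a => (fst a, negb (snd a))) w).

Definition bl (B : DeltaComplex) (k : nat) : cell B (S (S k)) -> list (Letter B) :=
  match k return cell B (S (S k)) -> list (Letter B) with
  | 0 => fun r =>
      [(gen B 0 (face B 1 2 r), false); (gen B 0 (face B 1 0 r), false);
       (gen B 0 (face B 1 1 r), true)]
  | S k' => fun r =>
      map (fun i => (gen B (S k') (face B (S (S k')) i r), false))
          (rev (seq 1 (S (S (S k')))))
      ++ [(gen B 0 (edge01 B (S (S k')) r), false);
          (gen B (S k') (face B (S (S k')) 0 r), false);
          (gen B 0 (edge01 B (S (S k')) r), true)]
  end.

(** The congruence presenting the inverse monoid M(X,P) = Inv< X u P | rho^2 = rho,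
    rho = rho bl(rho) > on words over letters and formal inverses
    (Vagner congruence + defining relations). *)
Inductive wcong (B : DeltaComplex) : list (Letter B) -> list (Letter B) -> Prop :=
| wc_refl w : wcong B w w
| wc_sym w z : wcong B w z -> wcong B z w
| wc_trans w z t : wcong B w z -> wcong B z t -> wcong B w t
| wc_ctx u w1 w2 z : wcong B w1 w2 -> wcong B (u ++ w1 ++ z) (u ++ w2 ++ z)
| wc_vag1 w : wcong B (w ++ linv B w ++ w) w
| wc_vag2 w z : wcong B (w ++ linv B w ++ z ++ linv B z) (z ++ linv B z ++ w ++ linv B w)
| wc_idem k (r : cell B (S (S k))) :
    wcong B [(gen B (S k) r, false); (gen B (S k) r, false)] [(gen B (S k) r, false)]
| wc_bl k (r : cell B (S (S k))) :
    wcong B [(gen B (S k) r, false)] ((gen B (S k) r, false) :: bl B k r).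

(** idempotents and natural partial order of M(X,P), on representatives *)
Definition idem (B : DeltaComplex) (w : list (Letter B)) : Prop := wcong B (w ++ w) w.
Definition mleq (B : DeltaComplex) (a b : list (Letter B)) : Prop :=
  exists e, idem B e /\ wcong B a (e ++ b).

(** right action of a letter on 0-cells of a complex labeled by lC *)
Definition step (C B : DeltaComplex) (lC : cmap C B) (v : cell C 0) (a : Letter B)
  (u : cell C 0) : Prop :=
  match a with
  | (existT _ k c0, b) =>
    (match k as k0 return cell B (S k0) -> Prop with
     | 0 => fun x => exists e : cell C 1, lC 1 e = x /\
              (if b then vertex C 1 0 e = u /\ vertex C 1 1 e = v
                    else vertex C 1 0 e = v /\ vertex C 1 1 e = u)
     | S k' => fun r => u = v /\
              exists c : cell C (S (S k')), lC (S (S k')) c = r /\ root C (S (S k')) c = v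
     end) c0
  end.

Fixpoint act (C B : DeltaComplex) (lC : cmap C B) (v : cell C 0) (w : list (Letter B))
  (u : cell C 0) : Prop :=
  match w with
  | [] => u = v
  | a :: w' => exists t, step C B lC v a t /\ act C B lC t w' u
  end.

Definition loopset (C B : DeltaComplex) (lC : cmap C B) (v : cell C 0)
  : list (Letter B) -> Prop := fun w => act C B lC v w v.

Definition full_closed_inverse_submonoid (B : DeltaComplex)
  (N M' : list (Letter B) -> Prop) : Prop :=
  (forall w, N w -> M' w) /\
  N [] /\
  (forall w z, N w -> N z -> N (w ++ z)) /\
  (forall w, N w -> N (linv B w)) /\
  (forall m n, N n -> mleq B n m -> N m) /\
  (forall e, idem B e -> M' e -> N e).

(* Main.v *)
Require Import Defs.
From Stdlib Require Import List Arith Relations Lia.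
Import ListNotations.

Definition sh (m j : nat) : nat := if j <? m then j else S j.
Lemma sh_lt m j : j < m -> sh m j = j.
Proof. unfold sh; intro; destruct (Nat.ltb_spec j m); lia. Qed.
Lemma sh_ge m j : m <= j -> sh m j = S j.
Proof. unfold sh; intro; destruct (Nat.ltb_spec j m); lia. Qed.

Lemma vertex_S (C : DeltaComplex) k i (c : cell C (S k)) :
  vertex C (S k) i c = if i <=? k then vertex C k i (face C k (S k) c) else vertex C k k (face C k 0 c).
Proof. reflexivity. Qed.

Lemma leb_f a b : b < a -> (a <=? b) = false.
Proof. intro; apply Nat.leb_gt; lia. Qed.
Lemma leb_t a b : a <= b -> (a <=? b) = true.
Proof. intro; apply Nat.leb_le; lia. Qed.

Lemma vertex_face (C : DeltaComplex) : forall k (c : cell C (S k)) m j,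
  m <= S k -> j <= k -> vertex C k j (face C k m c) = vertex C (S k) (sh m j) c.
Proof.
  induction k as [|k IH]; intros c m j Hm Hj.
  - assert (j = 0) by lia; subst j.
    destruct m as [|[|m]]; [ | | lia]; reflexivity.
  - destruct (Nat.eq_dec j (S k)) as [Ej|Nj].
    + subst j. rewrite (vertex_S C k (S k)). rewrite (leb_f (S k) k) by lia.
      destruct (Nat.eq_dec m 0) as [->|Nm0].
      * rewrite sh_ge by lia. rewrite (vertex_S C (S k) (S (S k))).
        rewrite (leb_f (S (S k)) (S k)) by lia.
        rewrite (vertex_S C k (S k)). rewrite (leb_f (S k) k) by lia. reflexivity.
      * destruct (Nat.eq_dec m (S (S k))) as [->|Nm].
        -- rewrite sh_lt by lia. rewrite (vertex_S C (S k) (S k)).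
           rewrite (leb_t (S k) (S k)) by lia.
           rewrite (vertex_S C k (S k)). rewrite (leb_f (S k) k) by lia. reflexivity.
        -- rewrite (face_face C k c 0 m) by lia.
           rewrite IH by lia. rewrite (sh_ge (pred m) k) by lia.
           rewrite sh_ge by lia.
           rewrite (vertex_S C (S k) (S (S k))).
           rewrite (leb_f (S (S k)) (S k)) by lia. reflexivity.
    + rewrite (vertex_S C k j). rewrite (leb_t j k) by lia.
      destruct (Nat.eq_dec m (S (S k))) as [->|Nm].
      * rewrite sh_lt by lia. rewrite (vertex_S C (S k) j).
        rewrite (leb_t j (S k)) by lia.
        rewrite (vertex_S C k j). rewrite (leb_t j k) by lia. reflexivity.
      * pose proof (face_face C k c m (S (S k)) ltac:(lia) ltac:(lia)) as E. simpl pred in E.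
        rewrite <- E. rewrite IH by lia.
        rewrite (vertex_S C (S k) (sh m j)).
        rewrite (leb_t (sh m j) (S k)) by (unfold sh; destruct (Nat.ltb_spec j m); lia).
        reflexivity.
Qed.

Lemma fvert (C D : DeltaComplex) (F : cmap C D) : commutes_faces C D F ->
  forall k i (c : cell C k), F 0 (vertex C k i c) = vertex D k i (F k c).
Proof.
  intros HF; induction k as [|k IH]; intros i c; [reflexivity|].
  rewrite (vertex_S C), (vertex_S D). destruct (i <=? k); rewrite IH, HF by lia; reflexivity.
Qed.

Lemma edge01_v (C : DeltaComplex) : forall k (c : cell C (S k)) j, j <= 1 ->
  vertex C 1 j (edge01 C k c) = vertex C (S k) j c.
Proof.
  induction k as [|k IH]; intros c j Hj; [reflexivity|].
  change (edge01 C (S k) c) with (edge01 C k (face C (S k) (S (S k)) c)).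
  rewrite IH by lia. rewrite vertex_face by lia. rewrite sh_lt by lia. reflexivity.
Qed.

Lemma edge01_map C D (F : cmap C D) : commutes_faces C D F ->
  forall k c, F 1 (edge01 C k c) = edge01 D k (F (S k) c).
Proof.
  intros HF; induction k as [|k IH]; intros c; [reflexivity|].
  change (edge01 C (S k) c) with (edge01 C k (face C (S k) (S (S k)) c)).
  change (edge01 D (S k) (F _ c)) with (edge01 D k (face D (S k) (S (S k)) (F _ c))).
  rewrite IH, HF by lia; reflexivity.
Qed.

Fixpoint edgeto (C : DeltaComplex) (k : nat) {struct k} : nat -> cell C (S k) -> cell C 1 :=
  match k return nat -> cell C (S k) -> cell C 1 with
  | 0 => fun _ c => c
  | S k' => fun i c => if i <=? S k' then edgeto C k' i (face C (S k') (S (S k')) c)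
                      else edgeto C k' (S k') (face C (S k') 1 c)
  end.

Lemma edgeto_v0 (C : DeltaComplex) : forall k i (c : cell C (S k)),
  vertex C 1 0 (edgeto C k i c) = vertex C (S k) 0 c.
Proof.
  induction k as [|k IH]; intros i c; [reflexivity|].
  change (edgeto C (S k) i c) with (if i <=? S k then edgeto C k i (face C (S k) (S (S k)) c)
                      else edgeto C k (S k) (face C (S k) 1 c)).
  destruct (i <=? S k); rewrite IH, vertex_face by lia; rewrite sh_lt by lia; reflexivity.
Qed.

Lemma edgeto_v1 (C : DeltaComplex) : forall k i (c : cell C (S k)), 1 <= i <= S k ->
  vertex C 1 1 (edgeto C k i c) = vertex C (S k) i c.
Proof.
  induction k as [|k IH]; intros i c Hi.
  - assert (i = 1) by lia; subst; reflexivity.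
  - change (edgeto C (S k) i c) with (if i <=? S k then edgeto C k i (face C (S k) (S (S k)) c)
                      else edgeto C k (S k) (face C (S k) 1 c)).
    destruct (Nat.leb_spec i (S k)).
    + rewrite IH, vertex_face by lia; rewrite sh_lt by lia; reflexivity.
    + rewrite IH, vertex_face by lia; rewrite sh_ge by lia. f_equal; lia.
Qed.

Lemma edgeto_map C D (F : cmap C D) : commutes_faces C D F ->
  forall k i c, F 1 (edgeto C k i c) = edgeto D k i (F (S k) c).
Proof.
  intros HF; induction k as [|k IH]; intros i c; [reflexivity|].
  change (edgeto C (S k) i c) with (if i <=? S k then edgeto C k i (face C (S k) (S (S k)) c)
                      else edgeto C k (S k) (face C (S k) 1 c)).
  change (edgeto D (S k) i (F _ c)) with (if i <=? S k then edgeto D k i (face D (S k) (S (S k)) (F _ c))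
                      else edgeto D k (S k) (face D (S k) 1 (F _ c))).
  destruct (i <=? S k); rewrite IH, HF by lia; reflexivity.
Qed.

Lemma step_e0 C B lC t x b u :
  step C B lC t (existT _ 0 x, b) u <-> exists e : cell C 1, lC 1 e = x /\
    (if b then vertex C 1 0 e = u /\ vertex C 1 1 e = t
          else vertex C 1 0 e = t /\ vertex C 1 1 e = u).
Proof. reflexivity. Qed.
Lemma step_eS C B lC t k x b u :
  step C B lC t (existT _ (S k) x, b) u <-> u = t /\
    exists c : cell C (S (S k)), lC (S (S k)) c = x /\ root C (S (S k)) c = t.
Proof. reflexivity. Qed.

Lemma act_nil C B lC t u : act C B lC t [] u <-> u = t.
Proof. reflexivity. Qed.
Lemma act_cons C B lC t a w u :
  act C B lC t (a :: w) u <-> exists s, step C B lC t a s /\ act C B lC s w u.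
Proof. reflexivity. Qed.

Lemma act_app C B lC : forall w z t u,
  act C B lC t (w ++ z) u <-> exists m, act C B lC t w m /\ act C B lC m z u.
Proof.
  induction w as [|a w IH]; intros z t u; simpl.
  - split; [intros H; exists t; auto | intros [m [-> H]]; exact H].
  - split.
    + intros [s [Hs H]]. apply IH in H as [m [H1 H2]]. exists m; split; [exists s; auto|auto].
    + intros [m [[s [Hs H1]] H2]]. exists s; split; auto. apply IH; eauto.
Qed.

Lemma step_inv C B lC t g b u : step C B lC t (g, b) u -> step C B lC u (g, negb b) t.
Proof.
  destruct g as [[|k] x].
  - rewrite !step_e0. intros [e [He Hb]]; exists e; split; auto; destruct b; simpl; tauto.
  - rewrite !step_eS. intros [-> H]; split; auto.
Qed.

Lemma linv_cons B a w : linv B (a :: w) = linv B w ++ [(fst a, negb (snd a))].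
Proof. reflexivity. Qed.

Lemma act_linv C B lC : forall w t u, act C B lC t w u -> act C B lC u (linv B w) t.
Proof.
  induction w as [|[g b] w IH]; intros t u H.
  - rewrite act_nil in H. subst; reflexivity.
  - rewrite act_cons in H. destruct H as [s [Hs H]]. rewrite linv_cons. apply act_app.
    exists s. split; [apply IH; auto|].
    apply act_cons. exists t; split; [apply step_inv; auto| reflexivity].
Qed.

Lemma step_det C B lC : locally_injective C B lC ->
  forall t a u u', step C B lC t a u -> step C B lC t a u' -> u = u'.
Proof.
  intros LI t [[[|k] x] b] u u'.
  - rewrite !step_e0. intros [e [He Hb]] [e' [He' Hb']]. destruct b.
    + assert (e = e') as <- by (apply (LI 1 1); [lia| |congruence]; destruct Hb, Hb'; congruence).
      destruct Hb, Hb'; congruence.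
    + assert (e = e') as <- by (apply (LI 1 0); [lia| |congruence]; destruct Hb, Hb'; congruence).
      destruct Hb, Hb'; congruence.
  - rewrite !step_eS. intros [-> _] [-> _]; reflexivity.
Qed.

Lemma step_inj C B lC : locally_injective C B lC ->
  forall t t' a u, step C B lC t a u -> step C B lC t' a u -> t = t'.
Proof.
  intros LI t t' [[[|k] x] b] u.
  - rewrite !step_e0. intros [e [He Hb]] [e' [He' Hb']]. destruct b.
    + assert (e = e') as <- by (apply (LI 1 0); [lia| |congruence]; destruct Hb, Hb'; congruence).
      destruct Hb, Hb'; congruence.
    + assert (e = e') as <- by (apply (LI 1 1); [lia| |congruence]; destruct Hb, Hb'; congruence).
      destruct Hb, Hb'; congruence.
  - rewrite !step_eS. intros [-> _] [-> _]; reflexivity.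
Qed.

Lemma act_det C B lC : locally_injective C B lC ->
  forall w t u u', act C B lC t w u -> act C B lC t w u' -> u = u'.
Proof.
  intros LI; induction w as [|a w IH]; intros t u u'.
  - rewrite !act_nil; congruence.
  - rewrite !act_cons. intros [s [Hs H]] [s' [Hs' H']].
    pose proof (step_det C B lC LI _ _ _ _ Hs Hs'); subst. eauto.
Qed.

Lemma act_inj C B lC : locally_injective C B lC ->
  forall w t t' u, act C B lC t w u -> act C B lC t' w u -> t = t'.
Proof.
  intros LI; induction w as [|a w IH]; intros t t' u.
  - rewrite !act_nil; congruence.
  - rewrite !act_cons. intros [s [Hs H]] [s' [Hs' H']].
    pose proof (IH _ _ _ H H'); subst. eapply step_inj; eauto.
Qed.

Lemma step_fwd C B lC (e : cell C 1) t u : vertex C 1 0 e = t -> vertex C 1 1 e = u ->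
  step C B lC t (gen B 0 (lC 1 e), false) u.
Proof. intros; apply step_e0; exists e; auto. Qed.
Lemma step_bwd C B lC (e : cell C 1) t u : vertex C 1 0 e = u -> vertex C 1 1 e = t ->
  step C B lC t (gen B 0 (lC 1 e), true) u.
Proof. intros; apply step_e0; exists e; auto. Qed.
Lemma step_cell C B lC k (c : cell C (S (S k))) t : root C _ c = t ->
  step C B lC t (gen B (S k) (lC _ c), false) t.
Proof. intros; apply step_eS; split; auto; exists c; auto. Qed.

Lemma act_faces C B lC : commutes_faces C B lC -> forall k (c : cell C (S (S (S k)))) l,
  (forall i, In i l -> 1 <= i <= S (S (S k))) ->
  act C B lC (root C _ c) (map (fun i => (gen B (S k) (face B (S (S k)) i (lC _ c)), false)) l) (root C _ c).
Proof.
  intros CF k c l; induction l as [|i l IH]; intros Hl; [reflexivity|].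
  simpl map. apply act_cons. exists (root C _ c). split; [|apply IH; intros; apply Hl; simpl; auto].
  assert (1 <= i <= S (S (S k))) by (apply Hl; simpl; auto).
  rewrite <- CF by lia. apply step_cell.
  unfold root. rewrite vertex_face by lia. rewrite sh_lt by lia. reflexivity.
Qed.

Lemma bl_loop C B lC : commutes_faces C B lC -> forall k (c : cell C (S (S k))),
  act C B lC (root C _ c) (bl B k (lC _ c)) (root C _ c).
Proof.
  intros CF [|k] c.
  - unfold bl. rewrite <- !CF by lia.
    apply act_cons; exists (vertex C 2 1 c); split.
    { apply step_fwd; rewrite vertex_face by lia; reflexivity. }
    apply act_cons; exists (vertex C 2 2 c); split.
    { apply step_fwd; rewrite vertex_face by lia; reflexivity. }
    apply act_cons; exists (root C _ c); split; [|reflexivity].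
    apply step_bwd; rewrite vertex_face by lia; reflexivity.
  - unfold bl; cbv beta iota. apply act_app. exists (root C _ c). split.
    { apply act_faces; auto. intros i Hi. apply in_rev in Hi. apply in_seq in Hi. lia. }
    rewrite <- edge01_map by auto. rewrite <- CF by lia.
    apply act_cons; exists (vertex C _ 1 c); split.
    { apply step_fwd; rewrite edge01_v by lia; reflexivity. }
    apply act_cons; exists (vertex C _ 1 c); split.
    { apply step_cell. unfold root. rewrite vertex_face by lia. reflexivity. }
    apply act_cons; exists (root C _ c); split; [|reflexivity].
    apply step_bwd; rewrite edge01_v by lia; reflexivity.
Qed.

Lemma act_wlw C B lC : locally_injective C B lC -> forall w t u,
  act C B lC t (w ++ linv B w) u <-> u = t /\ exists m, act C B lC t w m.
Proof.
  intros LI w t u; rewrite act_app; split.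
  - intros [m [H1 H2]]. split; [|eauto]. eapply act_det; eauto. apply act_linv; auto.
  - intros [-> [m H]]. exists m; split; auto. apply act_linv; auto.
Qed.

Lemma wcong_act C B lC : immersion C B lC -> forall w z, wcong B w z ->
  forall x0 u, act C B lC x0 w u <-> act C B lC x0 z u.
Proof.
  intros [CF LI] w z H; induction H; intros x0 u0.
  - tauto.
  - symmetry; auto.
  - rewrite IHwcong1; auto.
  - split; intros H'; apply act_app in H' as [m1 [H1 H']]; apply act_app in H' as [m2 [H2 H3]];
      apply act_app; exists m1; split; auto; apply act_app; exists m2; split; auto; apply IHwcong; auto.
  - split.
    + intros H; apply act_app in H as [m1 [H1 H]]; apply act_app in H as [m2 [H2 H3]].
      assert (m2 = x0) by (eapply act_det; eauto; apply act_linv; auto). subst; auto.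
    + intros H. apply act_app; exists u0; split; auto. apply act_app; exists x0; split; auto.
      apply act_linv; auto.
  - rewrite (app_assoc w (linv B w)), (app_assoc z (linv B z)).
    rewrite !act_app. split; intros [m [H1 H2]].
    + apply act_wlw in H1 as [-> H1]; auto. apply act_wlw in H2 as [-> H2]; auto.
      exists x0; split; apply act_wlw; auto.
    + apply act_wlw in H1 as [-> H1]; auto. apply act_wlw in H2 as [-> H2]; auto.
      exists x0; split; apply act_wlw; auto.
  - rewrite !act_cons. split.
    + intros [s [Hs [s' [Hs' H]]]]. rewrite act_nil in H. subst.
      apply step_eS in Hs as [-> Hs]. apply step_eS in Hs' as [-> Hs'].
      exists x0; split; [apply step_eS; auto|reflexivity].
    + intros [s [Hs H]]. rewrite act_nil in H. subst.
      apply step_eS in Hs as [-> Hs]. exists x0; split; [apply step_eS; auto|].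
      apply act_cons; exists x0; split; [apply step_eS; auto|reflexivity].
  - rewrite !act_cons. split.
    + intros [s [Hs H]]. rewrite act_nil in H. subst.
      pose proof Hs as Hs0. apply step_eS in Hs as [-> [c [Hc Hr]]]. exists x0; split; auto.
      subst. apply bl_loop; auto.
    + intros [s [Hs H]]. pose proof Hs as Hs0. apply step_eS in Hs as [-> [c [Hc Hr]]].
      exists x0; split; auto. apply act_nil.
      subst. eapply act_det; eauto. apply bl_loop; auto.
Qed.

Lemma idem_fix C B lC : immersion C B lC -> forall e t u,
  act C B lC t e u -> idem B e -> t = u.
Proof.
  intros IM e t u H Hi. pose proof IM as [_ LI].
  assert (H2 : act C B lC t (e ++ e) u) by (apply (wcong_act C B lC IM _ _ Hi); auto).
  apply act_app in H2 as [m [H1 H3]].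
  assert (m = u) by (eapply act_det; eauto). subst.
  eapply act_inj; eauto.
Qed.

Lemma act_map C D B lC lD (f : cmap C D) : commutes_faces C D f ->
  (forall k c, lD k (f k c) = lC k c) ->
  forall w t u, act C B lC t w u -> act D B lD (f 0 t) w (f 0 u).
Proof.
  intros CF Hl; induction w as [|[[[|k] x] b] w IH]; intros t u H.
  - rewrite act_nil in H; subst; reflexivity.
  - rewrite act_cons in H. destruct H as [s [Hs H]]. apply act_cons; exists (f 0 s); split; auto.
    apply step_e0 in Hs as [e [He Hb]]. apply step_e0; exists (f 1 e); split; [congruence|].
    rewrite <- !(fvert C D f CF). destruct b; destruct Hb; split; congruence.
  - rewrite act_cons in H. destruct H as [s [Hs H]]. apply act_cons; exists (f 0 s); split; auto.
    apply step_eS in Hs as [-> [c [Hc Hr]]]. apply step_eS; split; auto.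
    exists (f _ c); split; [congruence|]. unfold root. rewrite <- (fvert C D f CF). unfold root in Hr; congruence.
Qed.

Lemma path_C C B lC : forall x y, clos_refl_sym_trans _ (adj C) x y -> exists p, act C B lC x p y.
Proof.
  intros x y H; induction H.
  - destruct H as [e [H0 H1]]. exists [(gen B 0 (lC 1 e), false)].
    apply act_cons; exists y; split; [apply step_fwd; auto|reflexivity].
  - exists []; reflexivity.
  - destruct IHclos_refl_sym_trans as [p Hp]. exists (linv B p). apply act_linv; auto.
  - destruct IHclos_refl_sym_trans1 as [p Hp], IHclos_refl_sym_trans2 as [q Hq].
    exists (p ++ q). apply act_app; eauto.
Qed.

Lemma step_gen_false C B lC k x t s : step C B lC t (gen B k x, false) s ->
  exists c : cell C (S k), lC (S k) c = x /\ vertex C (S k) 0 c = t.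
Proof.
  destruct k as [|k]; unfold gen.
  - rewrite step_e0. intros [e [He [H0 H1]]]; eauto.
  - rewrite step_eS. intros [_ [c [Hc Hr]]]; eauto.
Qed.

Lemma step_gen_exists D B lD k (d : cell D (S k)) :
  exists s, step D B lD (vertex D (S k) 0 d) (gen B k (lD (S k) d), false) s.
Proof.
  destruct k as [|k]; unfold gen.
  - exists (vertex D 1 1 d). apply step_e0; exists d; auto.
  - exists (vertex D _ 0 d). apply step_eS; split; auto; exists d; auto.
Qed.

Lemma lift_act C D B lC lD (f : cmap C D) : commutes_faces C D f ->
  (forall k c, lD k (f k c) = lC k c) -> star_surjective C D f ->
  forall w t s, act D B lD (f 0 t) w s -> exists u, act C B lC t w u /\ f 0 u = s.
Proof.
  intros CF Hl SS; induction w as [|[[[|k] x] b] w IH]; intros t s H.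
  - rewrite act_nil in H; subst. exists t; split; reflexivity.
  - rewrite act_cons in H. destruct H as [s' [Hs H]].
    apply step_e0 in Hs as [e [He Hb]]. destruct b; destruct Hb as [H0 H1].
    + destruct (SS 1 1 t e ltac:(lia) H1) as [c [Hc1 Hc]].
      assert (E : f 0 (vertex C 1 0 c) = s') by (rewrite (fvert C D f CF); congruence).
      rewrite <- E in H. destruct (IH _ _ H) as [u [Hu Hfu]]. exists u; split; auto.
      apply act_cons; exists (vertex C 1 0 c); split; auto.
      apply step_e0; exists c; split; [rewrite <- Hl; congruence|auto].
    + destruct (SS 1 0 t e ltac:(lia) H0) as [c [Hc0 Hc]].
      assert (E : f 0 (vertex C 1 1 c) = s') by (rewrite (fvert C D f CF); congruence).
      rewrite <- E in H. destruct (IH _ _ H) as [u [Hu Hfu]]. exists u; split; auto.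
      apply act_cons; exists (vertex C 1 1 c); split; auto.
      apply step_e0; exists c; split; [rewrite <- Hl; congruence|auto].
  - rewrite act_cons in H. destruct H as [s' [Hs H]].
    apply step_eS in Hs as [-> [d [Hd Hr]]].
    destruct (SS _ 0 t d ltac:(lia) Hr) as [c [Hc0 Hc]].
    destruct (IH _ _ H) as [u [Hu Hfu]]. exists u; split; auto.
    apply act_cons; exists t; split; auto.
    apply step_eS; split; auto. exists c; split; [rewrite <- Hl; congruence|auto].
Qed.

Theorem mainTheorem15 (B C D : DeltaComplex) (lC : cmap C B) (lD : cmap D B)
  (f : cmap C D) (v : cell C 0) :
  single_vertex B -> finite_dim B -> finite_dim C -> finite_dim D ->
  connected C -> connected D ->
  immersion C B lC -> immersion D B lD -> immersion C D f ->
  (forall k (c : cell C k), lD k (f k c) = lC k c) ->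
  (covering C D f <->
   full_closed_inverse_submonoid B (loopset C B lC v) (loopset D B lD (f 0 v))).
Proof.
  intros _ _ _ _ connC connD IMC IMD IMf Hl.
  pose proof IMC as [CFC LIC]. pose proof IMD as [CFD LID]. pose proof IMf as [CFf LIf].
  unfold loopset. split.
  - intros [_ [SS SU]]. split; [|split; [|split; [|split; [|split]]]].
    + intros w H. apply (act_map C D B lC lD f CFf Hl _ _ _ H).
    + reflexivity.
    + intros w z H1 H2. apply act_app; eauto.
    + intros w H. apply act_linv; auto.
    + intros m n Hn [e [He Hw]].
      apply (wcong_act C B lC IMC _ _ Hw) in Hn.
      apply act_app in Hn as [u [H1 H2]].
      pose proof (idem_fix C B lC IMC _ _ _ H1 He). subst; auto.
    + intros e He HD. destruct (lift_act C D B lC lD f CFf Hl SS _ _ _ HD) as [u [Hu _]].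
      pose proof (idem_fix C B lC IMC _ _ _ Hu He). subst; auto.
  - intros [_ [_ [_ [_ [_ Full]]]]].
    assert (SS : star_surjective C D f).
    { intros k i v' d Hi Hd.
      destruct (path_C C B lC v v' (connC v v')) as [p Hp].
      destruct k as [|k].
      { exists v'. split; [reflexivity|]. exact (eq_sym Hd). }
      destruct (step_gen_exists D B lD k d) as [s Hs].
      destruct (Nat.eq_dec i 0) as [->|Ni].
      - set (a := p ++ [(gen B k (lD (S k) d), false)]).
        assert (HDa : act D B lD (f 0 v) a s).
        { apply act_app; exists (f 0 v'); split; [apply (act_map C D B lC lD f CFf Hl); auto|].
          apply act_cons; exists s; split; [congruence|reflexivity]. }
        assert (HC : act C B lC v (a ++ linv B a) v).
        { apply Full.
          - unfold idem. pose proof (wc_ctx B [] (a ++ linv B a ++ a) a (linv B a) (wc_vag1 B a)) as W.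
            simpl in W. rewrite !app_assoc in W |- *. exact W.
          - apply act_app; exists s; split; auto. apply act_linv; auto. }
        apply act_app in HC as [u [Ha _]]. apply act_app in Ha as [m1 [H1 H2]].
        assert (m1 = v') by (eapply (act_det C B lC LIC); eauto). subst m1.
        apply act_cons in H2 as [u' [H2 _]].
        destruct (step_gen_false C B lC _ _ _ _ H2) as [c [Hc Hc0]].
        exists c; split; auto.
        apply (LID (S k) 0); [lia| |congruence].
        rewrite <- (fvert C D f CFf). congruence.
      - set (q := [(gen B 0 (lD 1 (edgeto D k i d)), true)]).
        set (a := p ++ q ++ [(gen B k (lD (S k) d), false)]).
        assert (HDa : act D B lD (f 0 v) a s).
        { apply act_app; exists (f 0 v'); split; [apply (act_map C D B lC lD f CFf Hl); auto|].
          apply act_cons; exists (vertex D (S k) 0 d); split.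
          - apply step_bwd; [apply edgeto_v0|]. rewrite edgeto_v1 by lia; auto.
          - apply act_cons; exists s; split; [auto|reflexivity]. }
        assert (HC : act C B lC v (a ++ linv B a) v).
        { apply Full.
          - unfold idem. pose proof (wc_ctx B [] (a ++ linv B a ++ a) a (linv B a) (wc_vag1 B a)) as W.
            simpl in W. rewrite !app_assoc in W |- *. exact W.
          - apply act_app; exists s; split; auto. apply act_linv; auto. }
        apply act_app in HC as [u [Ha _]]. apply act_app in Ha as [m1 [H1 H2]].
        assert (m1 = v') by (eapply (act_det C B lC LIC); eauto). subst m1.
        apply act_cons in H2 as [m2 [Hq H2]].
        apply act_cons in H2 as [u' [H2 _]].
        destruct (step_gen_false C B lC _ _ _ _ H2) as [c [Hc Hc0]].
        apply step_e0 in Hq as [e [He [He0 He1]]].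
        assert (Ee : e = edgeto C k i c).
        { apply (LIC 1 0); [lia| rewrite edgeto_v0; congruence |].
          rewrite He, (edgeto_map C B lC CFC), Hc, (edgeto_map D B lD CFD). reflexivity. }
        assert (Vi : vertex C (S k) i c = v').
        { rewrite <- (edgeto_v1 C k i c) by lia. rewrite <- Ee. auto. }
        exists c; split; auto.
        apply (LID (S k) i); [lia| |congruence].
        rewrite <- (fvert C D f CFf). congruence. }
    split; [exact IMf|split; [exact SS|]].
    intros w.
    assert (Hgen : forall x y, clos_refl_sym_trans _ (adj D) x y ->
              (exists a, f 0 a = x) <-> (exists a, f 0 a = y)).
    { intros x y H; induction H.
      - destruct H as [e [H0 H1]]. split.
        + intros [a Ha]. destruct (SS 1 0 a e ltac:(lia) ltac:(congruence)) as [c [Hc0 Hc]].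
          exists (vertex C 1 1 c). rewrite (fvert C D f CFf). congruence.
        + intros [a Ha]. destruct (SS 1 1 a e ltac:(lia) ltac:(congruence)) as [c [Hc0 Hc]].
          exists (vertex C 1 0 c). rewrite (fvert C D f CFf). congruence.
      - tauto.
      - symmetry; auto.
      - rewrite IHclos_refl_sym_trans1; auto. }
    apply (Hgen _ _ (connD (f 0 v) w)). eauto.
Qed.
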